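(* Let $\alpha\in\mathbb C$, $m\in\mathbb N$. The map $\Upsilon_{(\alpha,m)}:\widehat R\to\mathbb C[[\rho]][\sigma]/(\sigma^m)$, $h\mapsto\gamma\big(\widehat T_{(\alpha,2m)}(h)\big)$, is a group homomorphism from $(\widehat R,+)$ to $(\mathbb C[[\rho]][\sigma]/(\sigma^m),\circ)$.
   Context: $\widehat R=\mathbb C[[z_1,z_2]]=\mathbb C[[\rho\cos\varphi,\rho\sin\varphi]]$; for $f\in\widehat R$ and $i\in\mathbb N_0$, $f^{(i)}_\alpha=\partial^if/\partial\varphi^i|_{\varphi=\alpha}\in\mathbb C[[\rho]]$, and $T_{(\alpha,k)}(f)=\sum_{i=0}^{k-1}f^{(i)}_\alpha\varepsilon^i/i!\in\mathbb C[[\rho]][\varepsilon]/(\varepsilon^k)$. For $h\in\widehat R$, $\widehat T_{(\alpha,k)}(h)\in\mathbb C[[\rho]][\varepsilon]/(\varepsilon^{k})$ is defined by $T_{(\alpha,k)}(\exp(h))=\widehat T_{(\alpha,k)}(h)\cdot\exp(h^{(0)}_\alpha)$. For a ring $\Bbbk$, $K=\Bbbk[\varepsilon^2]/(\varepsilon^{2m})\subset L=\Bbbk[\varepsilon]/(\varepsilon^{2m})$ and a unit $g\in L$, $\gamma(g)$ denotes the unique element of $K$ with $g\cdot(1+\varepsilon\gamma(g))\in K$; here $\Bbbk=\mathbb C[[\rho]]$ and $K$ is identified with $\mathbb C[[\rho]][\sigma]/(\sigma^m)$ via $\sigma=\varepsilon^2$. The operation is $\gamma_1\circ\gamma_2=(\gamma_1+\gamma_2)(1+\sigma\gamma_1\gamma_2)^{-1}$.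 *)

(* Defs.v *)
From HB Require Import structures.
From mathcomp Require Import all_boot all_order all_algebra.
From mathcomp Require Import reals.
From mathcomp Require Import sequences exp trigo.
From mathcomp Require Import complex.
From Stdlib Require Import ClassicalEpsilon.
Set Implicit Arguments. Unset Strict Implicit. Unset Printing Implicit Defensive.
Import Order.TTheory GRing.Theory Num.Theory.
Local Open Scope ring_scope.

Section Defs.
Variable R : realType.
Local Notation C := (R[i]).

Definition coshR (y : R) : R := (expR y + expR (- y)) / 2.
Definition sinhR (y : R) : R := (expR y - expR (- y)) / 2.
Definition cosC (z : C) : C :=
  Complex (cos (complex.Re z) * coshR (complex.Im z))
          (- (sin (complex.Re z) * sinhR (complex.Im z))).
Definition sinC (z : C) : C :=
  Complex (sin (complex.Re z) * coshR (complex.Im z))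
          (cos (complex.Re z) * sinhR (complex.Im z)).

(* Rhat = C[[z1,z2]] : f j k is the coefficient of z1^j z2^k. *)
Definition Rhat := nat -> nat -> C.
Definition Rhat_add (f g : Rhat) : Rhat := fun j k => f j k + g j k.

(* Elements of C[[rho]][eps] (resp. C[[rho]][sigma]) : x i n is the coefficient
   of eps^i rho^n (resp. sigma^i rho^n). *)
Definition ser := nat -> nat -> C.
Definition ser0 : ser := fun _ _ => 0.
Definition ser1 : ser := fun i n => ((i == 0%N) && (n == 0%N))%:R.
Definition ser_add (x y : ser) : ser := fun i n => x i n + y i n.
Definition ser_mul (x y : ser) : ser := fun i n =>
  \sum_(i1 < i.+1) \sum_(n1 < n.+1) x i1 n1 * y (i - i1)%N (n - n1)%N.
Definition ser_shift (x : ser) : ser := fun i n => if i is i'.+1 then x i' n else 0.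
(* reduction modulo (variable)^k : canonical representative *)
Definition ser_trunc (k : nat) (x : ser) : ser := fun i n => if (i < k)%N then x i n else 0.
Definition reduced (k : nat) (x : ser) : Prop := forall i n, (k <= i)%N -> x i n = 0.
Definition eqmod (k : nat) (x y : ser) : Prop := forall i n, (i < k)%N -> x i n = y i n.

(* Trigonometric polynomials in (cos phi, sin phi): {poly {poly C}},
   outer variable = cos phi, inner variable = sin phi.  d/dphi acts as the
   derivation with d(cos) = - sin, d(sin) = cos (chain rule). *)
Definition TP := {poly {poly C}}.
Definition cvar : TP := 'X.
Definition svar : TP := ('X)%:P.
Definition dphi (p : TP) : TP :=
  svar * - (p^`()) + cvar * map_poly (@deriv C) p.
Definition ev_at (a : C) (p : TP) : C := (p.[(cosC a)%:P]).[sinC a].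

(* f^{(i)}_alpha in C[[rho]]: the coefficient of rho^n of
   d^i/dphi^i f(rho cos phi, rho sin phi) at phi = alpha. *)
Definition fder (f : Rhat) (a : C) (i : nat) : nat -> C := fun n =>
  \sum_(j < n.+1) f j (n - j)%N * ev_at a (iter i dphi (cvar ^+ j * svar ^+ (n - j))).

Definition Tay (a : C) (k : nat) (f : Rhat) : ser := fun i n =>
  if (i < k)%N then fder f a i n / (i`!)%:R else 0.

(* \hat T_{(alpha,k)}(h): T(exp h) = \hat T(h) * exp(h^{(0)}_alpha), i.e.
   \hat T(h) = exp(T(h) - h^{(0)}_alpha), a finite (nilpotent) exponential. *)
Definition nilpart (a : C) (k : nat) (h : Rhat) : ser := fun i n =>
  if i is 0%N then 0 else Tay a k h i n.
Definition Tayhat (a : C) (k : nat) (h : Rhat) : ser :=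
  let N := nilpart a k h in
  ser_trunc k (fun i n => \sum_(j < k) iter j (ser_mul N) ser1 i n / (j`!)%:R).

(* embedding of K = k[sigma]/(sigma^m) into L via sigma = eps^2 *)
Definition embK (x : ser) : ser := fun i n => if odd i then 0 else x i./2 n.
(* x in L = k[eps]/(eps^(2m)) lies in K *)
Definition inK (m : nat) (x : ser) : Prop := forall i n, (i < 2 * m)%N -> odd i -> x i n = 0.

(* gamma(g): the unique element of K with g (1 + eps gamma(g)) in K *)
Definition gammaK (m : nat) (g : ser) : ser :=
  epsilon (inhabits ser0) (fun c => reduced m c /\
    inK m (ser_mul g (ser_add ser1 (ser_shift (embK c))))).

Definition invK (m : nat) (x : ser) : ser :=
  epsilon (inhabits ser0) (fun y => reduced m y /\ eqmod m (ser_mul x y) ser1).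

Definition circ (m : nat) (g1 g2 : ser) : ser :=
  ser_trunc m (ser_mul (ser_add g1 g2)
     (invK m (ser_add ser1 (ser_shift (ser_mul g1 g2))))).

Definition Upsilon (a : C) (m : nat) (h : Rhat) : ser := gammaK m (Tayhat a (2 * m) h).

End Defs.

(* Main.v *)
Require Import Defs.
From HB Require Import structures.
From mathcomp Require Import all_boot all_order all_algebra.
From mathcomp Require Import boolp reals complex.
From Stdlib Require Import ClassicalEpsilon FunctionalExtensionality.
From mathcomp Require Import zify ring.
Set Implicit Arguments. Unset Strict Implicit. Unset Printing Implicit Defensive.
Import Order.TTheory GRing.Theory Num.Theory.
Local Open Scope ring_scope.

Section Ring.
Variable R : realType.
Local Notation C := (R[i]).
Local Notation S := (ser R).

Lemma ser_ext (x y : S) : (forall i n, x i n = y i n) -> x = y.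
Proof. by move=> H; apply: functional_extensionality => i; apply: functional_extensionality => n. Qed.

Definition ser_opp (x : S) : S := fun i n => - x i n.

Lemma s_addA : associative (@ser_add R).
Proof. by move=> x y z; apply: ser_ext => i n; rewrite /ser_add addrA. Qed.
Lemma s_addC : commutative (@ser_add R).
Proof. by move=> x y; apply: ser_ext => i n; rewrite /ser_add addrC. Qed.
Lemma s_add0 : left_id (@ser0 R) (@ser_add R).
Proof. by move=> x; apply: ser_ext => i n; rewrite /ser_add /ser0 add0r. Qed.
Lemma s_addN : left_inverse (@ser0 R) ser_opp (@ser_add R).
Proof. by move=> x; apply: ser_ext => i n; rewrite /ser_add /ser0 /ser_opp addNr. Qed.

HB.instance Definition _ := gen_eqMixin S.
HB.instance Definition _ := gen_choiceMixin S.
HB.instance Definition _ := GRing.isZmodule.Build S s_addA s_addC s_add0 s_addN.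

Definition P2 := {poly {poly C}}.
Definition toP (B : nat) (x : S) : P2 := \poly_(i < B) \poly_(n < B) x i n.
Definition agreeB (B : nat) (x : S) (X : P2) :=
  forall j c, (j < B)%N -> (c < B)%N -> x j c = X`_j`_c.

Lemma agree_toP B x : agreeB B x (toP B x).
Proof. by move=> j c jB cB; rewrite /toP coef_poly jB coef_poly cB. Qed.

Lemma coef2M (P Q : P2) i n : (P * Q)`_i`_n =
  \sum_(j < i.+1) \sum_(c < n.+1) P`_j`_c * Q`_(i - j)`_(n - c).
Proof.
rewrite coefM coef_sum; apply: eq_bigr => j _; by rewrite coefM.
Qed.

Lemma agree_mul B x y X Y : agreeB B x X -> agreeB B y Y ->
  agreeB B (ser_mul x y) (X * Y).
Proof.
move=> ax ay j c jB cB; rewrite coef2M /ser_mul.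
apply: eq_bigr => j1 _; apply: eq_bigr => c1 _.
have := ltn_ord j1; have := ltn_ord c1 => c1c j1j.
rewrite ax ?ay //; lia.
Qed.

Lemma agree_one B : agreeB B (@ser1 R) 1.
Proof.
move=> j c _ _; rewrite /ser1 coef1.
case: j => [|j] /=; last by rewrite coef0.
by rewrite coefC; case: c.
Qed.

Lemma agree_ext (x y : S) :
  (forall B, exists X, agreeB B x X /\ agreeB B y X) -> x = y.
Proof.
move=> H; apply: ser_ext => i n; have [X [ax ay]] := H (i + n).+1.
by rewrite ax ?ay // ltnS ?leq_addr ?leq_addl.
Qed.

Lemma s_mulA : associative (@ser_mul R).
Proof.
move=> x y z; apply: agree_ext => B; exists (toP B x * (toP B y * toP B z)).
split; first by apply: agree_mul; [exact: agree_toP|apply: agree_mul; exact: agree_toP].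
by rewrite mulrA; apply: agree_mul; [apply: agree_mul; exact: agree_toP|exact: agree_toP].
Qed.
Lemma s_mulC : commutative (@ser_mul R).
Proof.
move=> x y; apply: agree_ext => B; exists (toP B x * toP B y).
split; first by apply: agree_mul; exact: agree_toP.
rewrite mulrC; apply: agree_mul; exact: agree_toP.
Qed.
Lemma s_mul1 : left_id (@ser1 R) (@ser_mul R).
Proof.
move=> x; apply: agree_ext => B; exists (toP B x); split; last exact: agree_toP.
by rewrite -[toP B x]mul1r; apply: agree_mul; [exact: agree_one|exact: agree_toP].
Qed.
Lemma s_mulDl : left_distributive (@ser_mul R) (@ser_add R).
Proof.
move=> x y z; apply: ser_ext => i n; rewrite /ser_mul /ser_add -big_split.
by apply: eq_bigr => j _; rewrite -big_split; apply: eq_bigr => c _; rewrite mulrDl.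
Qed.
Lemma s_one_neq0 : (@ser1 R) != (0 : S).
Proof.
apply/eqP => /(congr1 (fun f : S => f 0%N 0%N)); rewrite /ser1 /=.
by move/eqP; rewrite oner_eq0.
Qed.

HB.instance Definition _ := GRing.Zmodule_isComNzRing.Build S s_mulA s_mulC s_mul1 s_mulDl s_one_neq0.

Lemma mulE (x y : S) : x * y = ser_mul x y. Proof. by []. Qed.
Lemma addE (x y : S) : x + y = ser_add x y. Proof. by []. Qed.
Lemma oneE : (1 : S) = ser1 R. Proof. by []. Qed.
Lemma scoefD (x y : S) i n : (x + y) i n = x i n + y i n. Proof. by []. Qed.
Lemma scoefN (x : S) i n : (- x) i n = - x i n. Proof. by []. Qed.
Lemma scoefB (x y : S) i n : (x - y) i n = x i n - y i n. Proof. by []. Qed.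
Lemma scoef0 i n : (0 : S) i n = 0. Proof. by []. Qed.

End Ring.


Section Two.
Variable R : realType.
Local Notation C := (R[i]).
Local Notation S := (ser R).

Definition e : S := ser_shift (ser1 R).

Lemma agree_shift B (x : S) (X : P2 R) : agreeB B x X -> agreeB B (ser_shift x) ('X * X).
Proof.
move=> ax j c jB cB; rewrite coefXM; case: j jB => [|j] jB /=; first by rewrite coef0.
by rewrite ax //; lia.
Qed.

Lemma shiftE (x : S) : ser_shift x = e * x.
Proof.
apply: agree_ext => B; exists ('X * toP B x); split; first exact/agree_shift/agree_toP.
rewrite -[X in X * toP B x]mulr1 mulE; apply: agree_mul; last exact: agree_toP.
exact/agree_shift/agree_one.
Qed.

Lemma agree_embK B (x : S) (X : P2 R) : agreeB B x X -> agreeB B (embK x) (X \Po 'X^2).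
Proof.
move=> ax j c jB cB; rewrite coef_comp_poly_Xn // dvdn2 /embK.
case: (odd j) => /=; first by rewrite coef0.
by rewrite divn2 ax //; rewrite -divn2; lia.
Qed.

Lemma embK_mul (x y : S) : embK (x * y) = embK x * embK y.
Proof.
apply: agree_ext => B; exists ((toP B x \Po 'X^2) * (toP B y \Po 'X^2)); split.
  rewrite -comp_polyM; apply: agree_embK; apply: agree_mul; exact: agree_toP.
by apply: agree_mul; apply: agree_embK; exact: agree_toP.
Qed.
Lemma embK_add (x y : S) : embK (x + y) = embK x + embK y.
Proof. by apply: ser_ext => i n; rewrite /embK !scoefD; case: odd; rewrite ?addr0. Qed.
Lemma embK_opp (x : S) : embK (- x) = - embK x.
Proof. by apply: ser_ext => i n; rewrite /embK !scoefN; case: odd; rewrite ?oppr0. Qed.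
Lemma embK_one : embK (1 : S) = 1.
Proof. by apply: ser_ext => i n; rewrite /embK oneE /ser1; case: i => [|[|i]] //=; case: odd. Qed.
Lemma embK_e : embK e = e * e.
Proof.
apply: agree_ext => B; exists (('X * 1) * ('X * 1)); split.
  have -> : ('X * 1) * ('X * 1) = ('X * 1) \Po ('X^2 : P2 R).
    by rewrite !mulr1 comp_polyX expr2.
  exact/agree_embK/agree_shift/agree_one.
by apply: agree_mul; apply/agree_shift/agree_one.
Qed.

Lemma eqmod_refl k (x : S) : eqmod k x x. Proof. by []. Qed.
Lemma eqmod_sym k (x y : S) : eqmod k x y -> eqmod k y x.
Proof. by move=> H i n ik; rewrite H. Qed.
Lemma eqmod_trans k (x y z : S) : eqmod k x y -> eqmod k y z -> eqmod k x z.
Proof. by move=> H1 H2 i n ik; rewrite H1 ?H2. Qed.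
Lemma eqmodD k (x x' y y' : S) : eqmod k x x' -> eqmod k y y' -> eqmod k (x + y) (x' + y').
Proof. by move=> H1 H2 i n ik; rewrite !scoefD H1 ?H2. Qed.
Lemma eqmodN k (x x' : S) : eqmod k x x' -> eqmod k (- x) (- x').
Proof. by move=> H1 i n ik; rewrite !scoefN H1. Qed.
Lemma eqmodM k (x x' y y' : S) : eqmod k x x' -> eqmod k y y' -> eqmod k (x * y) (x' * y').
Proof.
move=> H1 H2 i n ik; rewrite !mulE /ser_mul; apply: eq_bigr => i1 _; apply: eq_bigr => n1 _.
have := ltn_ord i1 => ?; rewrite H1 ?H2 //; lia.
Qed.
Lemma eqmod_le k k' (x y : S) : (k <= k')%N -> eqmod k' x y -> eqmod k x y.
Proof. by move=> kk H i n ik; rewrite H //; lia. Qed.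
Lemma eqmod_trunc k (x : S) : eqmod k (ser_trunc k x) x.
Proof. by move=> i n ik; rewrite /ser_trunc ik. Qed.
Lemma eqmod_sub k (x y : S) : eqmod k (x - y) 0 -> eqmod k x y.
Proof. by move=> H i n ik; apply/eqP; rewrite -subr_eq0 -scoefB H. Qed.
Lemma eqmod_subr k (x y : S) : eqmod k x y -> eqmod k (x - y) 0.
Proof. by move=> H i n ik; rewrite scoefB H // subrr. Qed.
Lemma s_valM a b (x y : S) : eqmod a x 0 -> eqmod b y 0 -> eqmod (a + b) (x * y) 0.
Proof.
move=> H1 H2 i n ik; rewrite mulE /ser_mul scoef0; apply: big1 => i1 _; apply: big1 => n1 _.
have := ltn_ord i1 => ?; case: (ltnP i1 a) => ia; first by rewrite H1 // scoef0 mul0r.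
by rewrite H2 ?scoef0 ?mulr0 //; lia.
Qed.
Lemma s_valX j (x : S) : eqmod 1 x 0 -> eqmod j (x ^+ j) 0.
Proof.
move=> H; elim: j => [|j IH]; first by move=> i n.
by rewrite exprS; apply: (s_valM H IH).
Qed.
Lemma scoef_sum K (F : 'I_K -> S) i n : (\sum_(j < K) F j) i n = \sum_(j < K) F j i n.
Proof.
elim: K F => [|K IH] F; first by rewrite !big_ord0.
by rewrite !big_ord_recr -(IH (fun j => F (widen_ord (leqnSn K) j))).
Qed.
Lemma eqmod_sum k K (F G : 'I_K -> S) : (forall j, eqmod k (F j) (G j)) ->
  eqmod k (\sum_(j < K) F j) (\sum_(j < K) G j).
Proof. by move=> H i n ik; rewrite !scoef_sum; apply: eq_bigr => j _; rewrite H. Qed.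
Lemma embK_eqmod m (x y : S) : eqmod m x y -> eqmod (2 * m) (embK x) (embK y).
Proof. by move=> H i n ik; rewrite /embK; case: ifP => // _; rewrite H // -divn2; lia. Qed.

Lemma inv_exists m (w : S) : eqmod 1 w 1 -> exists v, reduced m v /\ eqmod m (ser_mul w v) (ser1 R).
Proof.
move=> H; set t := 1 - w.
have t0 : eqmod 1 t 0 by apply: eqmod_subr; apply: eqmod_sym.
exists (ser_trunc m (\sum_(j < m) t ^+ j)); split.
  by move=> i n im; rewrite /ser_trunc ltnNge im.
rewrite -mulE -oneE; apply: (@eqmod_trans _ _ (w * \sum_(j < m) t ^+ j)).
  by apply: eqmodM => //; apply: eqmod_trunc.
have -> : w * \sum_(j < m) t ^+ j = 1 - t ^+ m.
  have -> : w = -(t - 1) by rewrite /t; ring.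
  by rewrite mulNr -subrX1 opprB.
apply: eqmod_sub; have -> : 1 - t ^+ m - 1 = - t ^+ m by ring.
by rewrite -oppr0; apply/eqmodN/s_valX.
Qed.

Lemma inK_eqmod m (x y : S) : eqmod (2 * m) x y -> inK m y -> inK m x.
Proof. by move=> H Hy i n im io; rewrite H // Hy. Qed.
Lemma inK_mul m (x y : S) : inK m x -> inK m y -> inK m (x * y).
Proof.
move=> Hx Hy i n im io; rewrite mulE /ser_mul; apply: big1 => i1 _; apply: big1 => n1 _.
have := ltn_ord i1 => ?; case Ho: (odd i1); first by rewrite Hx ?mul0r //; lia.
rewrite Hy ?mulr0 //; first lia.
by move: io; rewrite -{1}(subnK (_ : (i1 <= i)%N)) ?oddD ?Ho ?addbF //; lia.
Qed.
Lemma inK_embK m (x : S) : inK m (embK x).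
Proof. by move=> i n _ io; rewrite /embK io. Qed.
Lemma inK_embK_shift m (x y : S) : eqmod m y 0 -> inK m (embK x + e * embK y).
Proof.
move=> H i n im io; rewrite scoefD -shiftE /embK io add0r /ser_shift.
case: i im io => [|i] //= im io; rewrite (negbTE io) H //; rewrite -divn2; lia.
Qed.

End Two.


Section Three.
Variable R : realType.
Local Notation C := (R[i]).
Local Notation S := (ser R).

Definition gspec m (g c : S) := reduced m c /\
    inK m (ser_mul g (ser_add (ser1 R) (ser_shift (embK c)))).

Lemma gspecE m (g c : S) : gspec m g c <-> reduced m c /\ inK m (g * (1 + e R * embK c)).
Proof. by rewrite /gspec -shiftE. Qed.

Lemma gamma_uniq m (g c c' : S) : eqmod 1 g 1 -> gspec m g c -> gspec m g c' -> c = c'.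
Proof.
move=> gg /gspecE [rc ic] /gspecE [rc' ic'].
set d := c - c'.
have id : inK m (g * (e R * embK d)).
  have -> : g * (e R * embK d) = g * (1 + e R * embK c) + - (g * (1 + e R * embK c')).
    by rewrite /d embK_add embK_opp; ring.
  move=> i n im io; rewrite scoefD scoefN ic // ic' // oppr0 addr0 //.
have key : forall i, (i < m)%N -> forall n, d i n = 0.
  elim/ltn_ind => i IH im n.
  have := id (i.*2.+1) n; rewrite -shiftE.
  set z := ser_shift (embK d).
  have zlow : forall j c, (j < i.*2.+1)%N -> z j c = 0.
    case => [|j] c0 //= jl; rewrite /embK; case: ifP => // _; apply: IH; last lia.
    rewrite -divn2; lia.
  have ztop : forall c, z i.*2.+1 c = d i c.
    by move=> c0; rewrite /z /= /embK odd_double doubleK.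
  have E : ser_mul g z i.*2.+1 n = d i n.
    rewrite /ser_mul big_ord_recl [X in _ + X]big1 ?addr0; last first.
      move=> i1 _; apply: big1 => n1 _; rewrite zlow ?mulr0 //.
      have := ltn_ord i1; rewrite /= /bump leq0n add1n; lia.
    rewrite big_ord_recl [X in _ + X]big1 ?addr0; last first.
      by move=> n1 _; rewrite gg // mul0r.
    have -> : g 0%N 0%N = 1 by rewrite gg.
    by rewrite mul1r !subn0 ztop.
  rewrite mulE E; apply; first lia.
  by rewrite /= odd_double.
apply: ser_ext => i n; case: (ltnP i m) => im.
  by have := key i im n; rewrite /d scoefB => /eqP; rewrite subr_eq0 => /eqP.
by rewrite rc // rc'.
Qed.

Lemma gamma_exists m (g : S) : eqmod 1 g 1 -> exists c, gspec m g c.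
Proof.
move=> gg.
pose a' : S := fun i n => g i.*2 n.
pose b' : S := fun i n => g i.*2.+1 n.
have gdec : g = embK a' + e R * embK b'.
  apply: ser_ext => j c; rewrite scoefD -shiftE /embK /ser_shift.
  case: j => [|j] /=; first by rewrite addr0.
  have hj := odd_double_half j; rewrite uphalf_half.
  case Ho : (odd j) hj => /= hj.
    by rewrite addr0 /a'; congr g; rewrite doubleD; move: hj; rewrite -!muln2; lia.
  by rewrite add0r /b'; congr g; move: hj; rewrite -!muln2; lia.
have ga : eqmod 1 a' 1 by move=> i n i1; (have -> : i = 0%N by lia); exact: gg.
have [v [rv av]] := inv_exists m ga.
pose c' : S := - (b' * v).
exists (ser_trunc m c'); apply/gspecE; split.
  by move=> i n im; rewrite /ser_trunc ltnNge im.
apply: (@inK_eqmod _ _ _ (g * (1 + e R * embK c'))).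
  apply: eqmodM => //; apply: eqmodD => //; apply: eqmodM => //.
  by apply: embK_eqmod; apply: eqmod_trunc.
have -> : g * (1 + e R * embK c') =
    embK (a' + e R * (b' * c')) + e R * embK (b' + a' * c').
  by rewrite {1}gdec !embK_add !embK_mul embK_e; ring.
apply: inK_embK_shift.
have -> : b' + a' * c' = b' * (1 - a' * v) by rewrite /c'; ring.
rewrite -(mulr0 b'); apply: eqmodM => //.
apply: eqmod_subr; apply: eqmod_sym; exact: av.
Qed.

Lemma circ_spec m (g g1 g2 c1 c2 : S) : eqmod (2 * m) g (g1 * g2) ->
  gspec m g1 c1 -> gspec m g2 c2 -> gspec m g (circ m c1 c2).
Proof.
move=> gE /gspecE [r1 i1] /gspecE [r2 i2]; apply/gspecE; split.
  by move=> i n im; rewrite /circ /ser_trunc ltnNge im.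
set w : S := ser_add (ser1 R) (ser_shift (ser_mul c1 c2)).
have gw : eqmod 1 w 1.
  move=> i n i1'; (have -> : i = 0%N by lia); by rewrite /w /ser_add /= addr0.
have [rV wV] : reduced m (invK m w) /\ eqmod m (ser_mul w (invK m w)) (ser1 R).
  exact: (epsilon_spec _ (fun y => reduced m y /\ eqmod m (ser_mul w y) (ser1 R)) (inv_exists m gw)).
rewrite /circ -/w; set V' := invK m w in rV wV *.
apply: (@inK_eqmod _ _ _ (g1 * g2 * (1 + e R * embK ((c1 + c2) * V')))).
  apply: eqmodM => //; apply: eqmodD => //; apply: eqmodM => //.
  by apply: embK_eqmod; apply: eqmod_trunc.
apply: (@inK_eqmod _ _ _ ((g1 * (1 + e R * embK c1)) * (g2 * (1 + e R * embK c2)) * embK V')); last first.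
  by apply: inK_mul; [apply: inK_mul|apply: inK_embK].
have -> : (g1 * (1 + e R * embK c1)) * (g2 * (1 + e R * embK c2)) * embK V' =
   g1 * g2 * (embK (w * V') + e R * embK ((c1 + c2) * V')).
  rewrite /w -addE -mulE -oneE shiftE !embK_mul !embK_add embK_one !embK_mul embK_e; ring.
apply: eqmodM => //; apply: eqmodD => //.
by rewrite -embK_one; apply: embK_eqmod; apply: eqmod_sym; exact: wV.
Qed.

End Three.


Lemma tri_sq (V : zmodType) k (F : nat -> nat -> V) :
  \sum_(j < k) \sum_(i < j.+1) F (j - i)%N i =
  \sum_(i < k) \sum_(a < k) (if (a + i < k)%N then F a i else 0).
Proof.
have -> : \sum_(j < k) \sum_(i < j.+1) F (j - i)%N i =
    \sum_(j < k) \sum_(i < k) (if (i <= j)%N then F (j - i)%N i else 0).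
  apply: eq_bigr => j _.
  rewrite (big_ord_widen k (fun i => F (j - i)%N i)) ?ltn_ord // big_mkcond /=.
  by apply: eq_bigr => i _; rewrite ltnS.
rewrite exchange_big /=; apply: eq_bigr => i _.
have ik := ltn_ord i.
rewrite -(big_mkord xpredT (fun j => if (i <= j)%N then F (j - i)%N i else 0)).
rewrite -(big_mkord xpredT (fun a => if (a + i < k)%N then F a i else 0)).
rewrite (big_cat_nat (leq0n i) (ltnW ik)) /= big1_seq ?add0r; last first.
  by move=> j /andP [_]; rewrite mem_index_iota => /andP [_ ji]; rewrite leqNgt ji.
rewrite [RHS](big_cat_nat (leq0n (k - i)) (leq_subr i k)) /=.
rewrite [X in _ = _ + X]big1_seq ?addr0; last first.
  move=> a /andP [_]; rewrite mem_index_iota => /andP [ka _].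
  by have -> : (a + i < k)%N = false by lia.
have := big_addn 0 k i xpredT (fun j => if (i <= j)%N then F (j - i)%N i else 0).
rewrite add0n => ->; apply: eq_big_nat => a /andP [_ ak].
rewrite leq_addl addnK; have -> : (a + i < k)%N by lia. by [].
Qed.

Section Four.
Variable R : realType.
Local Notation C := (R[i]).
Local Notation S := (ser R).

Definition sc (c : C) (x : S) : S := fun i n => c * x i n.

Lemma sc_sum c K (F : 'I_K -> S) : sc c (\sum_(i < K) F i) = \sum_(i < K) sc c (F i).
Proof. by apply: ser_ext => i n; rewrite /sc !scoef_sum mulr_sumr. Qed.
Lemma coef_natmul (x : S) k i n : (x *+ k) i n = x i n *+ k.
Proof. by elim: k => [|k IH]; rewrite ?mulr0n // !mulrS scoefD IH. Qed.
Lemma sc_natmul c (x : S) k : sc c (x *+ k) = sc (c * k%:R) x.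
Proof. by apply: ser_ext => i n; rewrite /sc coef_natmul -mulrA mulr_natl. Qed.
Lemma sc_mull c (x y : S) : sc c x * y = sc c (x * y).
Proof.
apply: ser_ext => i n; rewrite /sc !mulE /ser_mul mulr_sumr; apply: eq_bigr => j _.
by rewrite mulr_sumr; apply: eq_bigr => l _; rewrite mulrA.
Qed.
Lemma sc_mulr c (x y : S) : x * sc c y = sc c (x * y).
Proof. by rewrite mulrC sc_mull mulrC. Qed.
Lemma sc_sc a b (x : S) : sc a (sc b x) = sc (a * b) x.
Proof. by apply: ser_ext => i n; rewrite /sc mulrA. Qed.
Lemma sc_val k c (x : S) : eqmod k x 0 -> eqmod k (sc c x) 0.
Proof. by move=> H i n ik; rewrite /sc H // mulr0. Qed.

Lemma eqmod_sum0 k K (F : 'I_K -> S) : (forall j, eqmod k (F j) 0) ->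
  eqmod k (\sum_(j < K) F j) 0.
Proof. by move=> H i n ik; rewrite scoef_sum scoef0; apply: big1 => j _; rewrite H. Qed.

Definition Ex k (N : S) : S := \sum_(j < k) sc (j`!%:R^-1) (N ^+ j).

Lemma fact_neq0 n : (n`!%:R : C) != 0.
Proof. by rewrite pnatr_eq0 -lt0n fact_gt0. Qed.

Lemma binE j i : (i <= j)%N ->
  (j`!%:R^-1 : C) * ('C(j, i))%:R = ((j - i)`!%:R)^-1 * (i`!%:R)^-1.
Proof.
move=> ij; have h := bin_fact ij.
have hC : ('C(j, i)%:R : C) != 0 by rewrite pnatr_eq0 -lt0n bin_gt0.
move/(congr1 (fun n => n%:R : C)): h; rewrite !natrM => <-.
have := fact_neq0 i; have := fact_neq0 (j - i) => h1 h2.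
by field; rewrite hC h1 h2.
Qed.

Lemma Ex_mul k (N1 N2 : S) : eqmod 1 N1 0 -> eqmod 1 N2 0 ->
  eqmod k (Ex k (N1 + N2)) (Ex k N1 * Ex k N2).
Proof.
move=> v1 v2.
pose F (a b : nat) : S := sc (((a`!%:R)^-1 : C) * (b`!%:R)^-1) (N1 ^+ a * N2 ^+ b).
have -> : Ex k (N1 + N2) = \sum_(j < k) \sum_(i < j.+1) F (j - i)%N i.
  apply: eq_bigr => j _; rewrite exprDn sc_sum; apply: eq_bigr => i _.
  by rewrite sc_natmul binE // -ltnS.
have -> : Ex k N1 * Ex k N2 = \sum_(a < k) \sum_(b < k) F a b.
  rewrite /Ex mulr_suml; apply: eq_bigr => a _; rewrite mulr_sumr.
  by apply: eq_bigr => b _; rewrite sc_mull sc_mulr sc_sc.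
rewrite tri_sq exchange_big /=.
apply: eqmod_sum => a; apply: eqmod_sum => b.
case: ifP => // ab; apply: eqmod_sym; apply: sc_val.
apply: (@eqmod_le _ k (a + b)); [lia|apply: s_valM; exact: s_valX].
Qed.

Lemma Ex_good k (N : S) : (0 < k)%N -> eqmod 1 N 0 -> eqmod 1 (Ex k N) 1.
Proof.
move=> k0 vN; case: k k0 => // k _; rewrite /Ex big_ord_recl /=.
apply: eqmod_sub.
have -> : sc (0`!%:R^-1) (N ^+ 0) + \sum_(i < k) sc ((bump 0 i)`!%:R^-1) (N ^+ bump 0 i) - 1
   = \sum_(i < k) sc ((bump 0 i)`!%:R^-1) (N ^+ bump 0 i).
  have -> : sc (0`!%:R^-1) (N ^+ 0) = 1.
    by apply: ser_ext => i n; rewrite /sc expr0 /= invr1 mul1r.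
  by rewrite addrAC subrr add0r.
apply: eqmod_sum0 => i; apply: sc_val.
by apply: (@eqmod_le _ 1 (bump 0 i)); [rewrite /bump; lia|apply: s_valX].
Qed.

Lemma iterE (N : S) j : iter j (ser_mul N) (ser1 R) = N ^+ j.
Proof. by elim: j => [|j IH] //=; rewrite IH exprS. Qed.

Lemma TayhatE a k (h : Rhat R) : Tayhat a k h = ser_trunc k (Ex k (nilpart a k h)).
Proof.
rewrite /Tayhat /=; congr ser_trunc; apply: ser_ext => i n.
rewrite /Ex scoef_sum; apply: eq_bigr => j _; by rewrite iterE /sc mulrC.
Qed.

Lemma nil_val a k (h : Rhat R) : eqmod 1 (nilpart a k h) 0.
Proof. by move=> i n i1; have -> : i = 0%N by lia. Qed.

Lemma fder_add (f g : Rhat R) a i n : fder (Rhat_add f g) a i n = fder f a i n + fder g a i n.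
Proof. by rewrite /fder -big_split; apply: eq_bigr => j _; rewrite /Rhat_add mulrDl. Qed.

Lemma nil_add a k (h1 h2 : Rhat R) :
  nilpart a k (Rhat_add h1 h2) = nilpart a k h1 + nilpart a k h2.
Proof.
apply: ser_ext => i n; rewrite scoefD /nilpart; case: i => [|i]; first by rewrite addr0.
rewrite /Tay; case: ifP => _; last by rewrite addr0.
by rewrite fder_add mulrDl.
Qed.

End Four.

Theorem lemma3p15 (R : realType) (alpha : R[i]) (m : nat) (h1 h2 : Rhat R) :
  Upsilon alpha m (Rhat_add h1 h2) = circ m (Upsilon alpha m h1) (Upsilon alpha m h2).
Proof.
case: m => [|m].
  rewrite /Upsilon /circ; set g := Tayhat _ _ _.
  have := epsilon_spec (inhabits (ser0 R)) (gspec 0 g) (ex_intro _ (ser0 R) (conj (fun _ _ _ => erefl) (fun _ _ i0 => match notF i0 with end))).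
  move=> [r _]; apply: ser_ext => i n; exact: (r i n (leq0n i)).
set k := (2 * m.+1)%N.
have k0 : (0 < k)%N by rewrite /k; lia.
have good : forall h : Rhat R, eqmod 1 (Tayhat alpha k h) 1.
  move=> h; rewrite TayhatE; apply: (@eqmod_trans _ _ _ (Ex k (nilpart alpha k h))).
    apply: (eqmod_le k0); exact: eqmod_trunc.
  apply: (Ex_good k0); exact: nil_val.
have spec : forall g : ser R, eqmod 1 g 1 -> gspec m.+1 g (gammaK m.+1 g).
  by move=> g gg; exact: (epsilon_spec (inhabits (ser0 R)) (gspec m.+1 g) (gamma_exists m.+1 gg)).
rewrite /Upsilon -/k.
apply: (gamma_uniq (good (Rhat_add h1 h2))); first exact: spec.
apply: (circ_spec (g1 := Tayhat alpha k h1) (g2 := Tayhat alpha k h2)); last first.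
- exact: spec.
- exact: spec.
rewrite !TayhatE nil_add.
apply: (@eqmod_trans _ _ _ (Ex k (nilpart alpha k h1 + nilpart alpha k h2))).
  exact: eqmod_trunc.
apply: (@eqmod_trans _ _ _ (Ex k (nilpart alpha k h1) * Ex k (nilpart alpha k h2))).
  by apply: Ex_mul; apply: nil_val.
by apply: eqmodM; apply: eqmod_sym; apply: eqmod_trunc.
Qed.
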